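(* Consider an instance of the destructive weighted-\$-protection problem. Suppose the defender succeeds by awarding a set $\mathcal{V}_F\subseteq\mathcal{V}$ with $\sum_{v_j\in\mathcal{V}_F}p_j^a\le F$. If $v_{j'}\prec v_j$, $v_{j'}\in\mathcal{V}_F$ and $v_j\notin\mathcal{V}_F$, then the defender also succeeds by awarding $(\mathcal{V}_F\setminus\{v_{j'}\})\cup\{v_j\}$.
   Context: Election model. Candidates $\mathcal{C}=\{c_1,\dots,c_m\}$, voters $\mathcal{V}=\{v_1,\dots,v_n\}$; voter $v_j$ has a preference list $\tau_j$ (a linear order of $\mathcal{C}$), weight $w_j\in\mathbb{Z}_{>0}$, awarding price $p_j^a\in\mathbb{Z}_{>0}$, bribing price $p_j^b\in\mathbb{Z}_{>0}$. A scoring rule $\alpha=(\alpha_1\ge\cdots\ge\alpha_m)$ of nonnegative integers gives the candidate at position $z$ of $v_j$'s list $w_j\alpha_z$ points; total score is the sum over voters. In the destructive weighted-\$-protection problem, $c_m$ has maximum total score without bribery; there is a defense budget $F$ and an attack budget $B$. Given awarded voters $\mathcal{V}_F$, the attacker may choose $\mathcal{V}_B\subseteq\mathcal{V}\setminus\mathcal{V}_F$ with $\sum_{v_j\in\mathcal{V}_B}p_j^b\le B$ and replace each list in $\mathcal{V}_B$ by an arbitrary list; the defender succeeds with $\mathcal{V}_F$ (of total awarding price at most $F$) if no such bribery makes some $c\neq c_m$ obtain a strictly higher total score than $c_m$. Dominance: $v_{j'}\prec v_j$ if either (i) $\tau_j=\tau_{j'}$, $w_j\ge w_{j'}$, $p_j^a\le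 p_{j'}^a$, $p_j^b\le p_{j'}^b$ with at least one of these three inequalities strict; or (ii) $\tau_j=\tau_{j'}$, $w_j=w_{j'}$, $p_j^a=p_{j'}^a$, $p_j^b=p_{j'}^b$ and $j'<j$. *)

(* Defs.v *)
From mathcomp Require Import all_boot all_fingroup.
Set Implicit Arguments. Unset Strict Implicit. Unset Printing Implicit Defensive.

(* Candidates are 'I_m, voters are 'I_n.  A preference list of a voter is a
   permutation tau : {perm 'I_m} mapping a position z (0-based, 0 = top)
   to the candidate at that position.  The position of candidate c is
   (tau^-1) c.  alpha : 'I_m -> nat is the scoring vector (0-based). *)

Definition score (m n : nat) (alpha : 'I_m -> nat) (w : 'I_n -> nat)
  (tau : 'I_n -> {perm 'I_m}) (c : 'I_m) : nat :=
  \sum_(j < n) w j * alpha ((tau j)^-1%g c).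

Definition defender_succeeds (m n : nat) (alpha : 'I_m -> nat) (w : 'I_n -> nat)
  (tau : 'I_n -> {perm 'I_m}) (pa pb : 'I_n -> nat) (F B : nat) (cm : 'I_m)
  (VF : {set 'I_n}) : Prop :=
  \sum_(j in VF) pa j <= F /\
  forall (VB : {set 'I_n}) (tau' : 'I_n -> {perm 'I_m}),
    [disjoint VB & VF] ->
    \sum_(j in VB) pb j <= B ->
    (forall j, j \notin VB -> tau' j = tau j) ->
    forall c : 'I_m, c != cm -> score alpha w tau' c <= score alpha w tau' cm.

(* Dominance: dominated j' j  means  v_{j'} < v_j. *)
Definition dominated (m n : nat) (w : 'I_n -> nat) (tau : 'I_n -> {perm 'I_m})
  (pa pb : 'I_n -> nat) (j' j : 'I_n) : bool :=
  (tau j == tau j') &&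
  ( [&& w j' <= w j, pa j <= pa j', pb j <= pb j'
      & [|| w j' < w j, pa j < pa j' | pb j < pb j'] ]
  || [&& w j == w j', pa j == pa j', pb j == pb j' & (j' < j)%N ]).

(* Main.v *)
Require Import Defs.
From mathcomp Require Import all_boot all_fingroup.
From mathcomp Require Import zify.

Lemma disjP' (T : finType) (A B : {set T}) :
  [disjoint A & B] <-> (forall x, x \in A -> x \notin B).
Proof.
rewrite disjoint_subset; split.
  by move=> /subsetP H x /H; rewrite inE.
by move=> H; apply/subsetP => x /H; rewrite inE.
Qed.

Lemma score_split m n (alpha : 'I_m -> nat) (w : 'I_n -> nat) tau (j j' : 'I_n) c :
  j != j' ->
  score alpha w tau c = w j * alpha ((tau j)^-1%g c) + w j' * alpha ((tau j')^-1%g c)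
    + \sum_(k | (k != j) && (k != j')) w k * alpha ((tau k)^-1%g c).
Proof.
move=> ne; rewrite /score (bigD1 j) //= (bigD1 j') //= 1?eq_sym //.
by rewrite addnA.
Qed.

Theorem lemma6 (m' n : nat) (alpha : 'I_m'.+1 -> nat)
  (alpha_noninc : forall z z' : 'I_m'.+1, z <= z' -> alpha z' <= alpha z)
  (w pa pb : 'I_n -> nat)
  (w_pos : forall j, 0 < w j) (pa_pos : forall j, 0 < pa j) (pb_pos : forall j, 0 < pb j)
  (tau : 'I_n -> {perm 'I_m'.+1}) (F B : nat)
  (cm_max : forall c : 'I_m'.+1, score alpha w tau c <= score alpha w tau ord_max)
  (VF : {set 'I_n}) (j' j : 'I_n) :
  defender_succeeds alpha w tau pa pb F B ord_max VF ->
  dominated w tau pa pb j' j ->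
  j' \in VF -> j \notin VF ->
  defender_succeeds alpha w tau pa pb F B ord_max ((VF :\ j') :|: [set j]).
Proof.
move=> [HF Hatt] Hdom Hj' Hj.
have jj' : j != j' by apply/eqP => E; rewrite E Hj' in Hj.
have [Etau [Hw [Hpa Hpb]]] : tau j = tau j' /\ w j' <= w j /\ pa j <= pa j' /\ pb j <= pb j'.
  move: Hdom; rewrite /dominated => /andP [/eqP -> /orP [/and4P [? ? ? _]|/and4P [/eqP -> /eqP -> /eqP -> _]]] //.
have jVF' : j \notin VF :\ j' by rewrite inE negb_and Hj orbT.
split.
  rewrite setUC big_setU1 //=.
  move: HF; rewrite (big_setD1 j' Hj') /= => H; apply: leq_trans H; by rewrite leq_add2r.
move=> VB tau' Hdis HB Hag c Hc.
move/disjP': Hdis => Hdis.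
have jVB : j \notin VB.
  by apply/negP => /Hdis; rewrite !inE eqxx orbT.
case: (boolP (j' \in VB)) => Hj'B; last first.
  apply: (Hatt VB tau') => //; apply/disjP' => x xB.
  apply/negP => xVF; move: (Hdis x xB); rewrite !inE xVF andbT orbC /=.
  rewrite negb_or negbK => /andP [_ /eqP E]; by rewrite -E xB in Hj'B.
have m'pos : 0 < m'.
  move: Hc; case: c => [c cl] /=; rewrite /ord_max; move=> /eqP ne.
  have : c != m' by apply/eqP => E; apply: ne; apply: val_inj => /=.
  lia.

pose p : {perm 'I_m'.+1} := (tperm c ord0 * tperm (tperm c ord0 ord_max) ord_max)%g.
have o0m : (ord0 : 'I_m'.+1) != ord_max.
  by apply/eqP => /(congr1 val) /=; lia.
have pc : p c = ord0.
  rewrite permM tpermL.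
  case: (tpermP (tperm c ord0 ord_max) ord_max ord0) => [E|E|] //.
  - exfalso; move: E; case: (tpermP c ord0 ord_max) => [E1 E2|E1 E2|E1 E2 E3].
    + by rewrite E1 eqxx in Hc.
    + by rewrite E1 eqxx in o0m.
    + by rewrite E3 eqxx in o0m.
  - by rewrite E eqxx in o0m.
have pcm : p ord_max = ord_max by rewrite permM tpermL.
pose tau'' k := if k == j then (p^-1)%g else if k == j' then tau j' else tau' k.
have Hlo : forall z, alpha ord_max <= alpha z.
  by move=> z; apply: alpha_noninc; rewrite /= -ltnS ltn_ord.
have Hhi : forall z, alpha z <= alpha ord0 by move=> z; apply: alpha_noninc.
have H := Hatt (j |: (VB :\ j')) tau'' _ _ _ c Hc.
have HH : score alpha w tau'' c <= score alpha w tau'' ord_max.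
  apply: H.
  - apply/disjP' => y; rewrite !inE => /orP [/eqP ->//|/andP [yj yB]].
    by move: (Hdis y yB); rewrite !inE negb_or negb_and yj /= => /andP [].
  - rewrite big_setU1 /=; last by rewrite !inE negb_and jVB orbT.
    move: HB; rewrite (big_setD1 j' Hj'B) /= => HB.
    by apply: leq_trans HB; rewrite leq_add2r.
  - move=> k; rewrite !inE negb_or negb_and negbK => /andP [kj kB].
    rewrite /tau'' (negbTE kj); case: eqP => [-> //|/eqP kj'].
    by apply: Hag; move: kB; rewrite (negbTE kj').
move: HH; rewrite !(@score_split _ _ alpha w _ j j' _ jj').
have Hs : forall d, \sum_(k | (k != j) && (k != j')) w k * alpha ((tau'' k)^-1%g d)
   = \sum_(k | (k != j) && (k != j')) w k * alpha ((tau' k)^-1%g d).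
  move=> d; apply: eq_bigr => k /andP [kj kj'].
  by rewrite /tau'' (negbTE kj) (negbTE kj').
have jj2 : j' != j by rewrite eq_sym.
rewrite !Hs /tau'' eqxx (negbTE jj2) eqxx invgK pc pcm Hag // Etau.
set apc := alpha ((tau j')^-1%g c); set apm := alpha ((tau j')^-1%g ord_max).
set asc := alpha ((tau' j')^-1%g c); set asm := alpha ((tau' j')^-1%g ord_max).
set A0 := alpha ord0; set AL := alpha ord_max.
have h1 : apc <= A0 by apply: Hhi.
have h2 : asc <= A0 by apply: Hhi.
have h3 : AL <= apm by apply: Hlo.
have h4 : AL <= asm by apply: Hlo.
move: (w j) (w j') Hw => a b Hab.
rewrite -(subnKC Hab); move: (a - b) => d.
have g1 := leq_mul (leqnn d) h1. have g2 := leq_mul (leqnn b) h2.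
have g3 := leq_mul (leqnn d) h3. have g4 := leq_mul (leqnn b) h4.
rewrite !mulnDl; lia.
Qed.
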